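(* Let $\mathcal{D}$ be a complex vector space and let $\mathfrak{t},\mathfrak{w}$ be sesquilinear forms on $\mathcal{D}$ such that $\mathfrak{w}\geq 0$ and $M_l(\mathfrak{t})\neq\varnothing$. Then $\mathfrak{t}=\mathfrak{t}_{lr}+\mathfrak{t}_{ls}$, where $\mathfrak{t}_{lr}$ is a $\mathfrak{w}$-left regular sesquilinear form on $\mathcal{D}$ and $\mathfrak{t}_{ls}$ is a $\mathfrak{w}$-left strongly singular sesquilinear form on $\mathcal{D}$.
   Context: A sesquilinear form on $\mathcal{D}$ is a map $\mathfrak{t}:\mathcal{D}\times\mathcal{D}\to\mathbb{C}$, linear in the first and anti-linear in the second variable; write $\mathfrak{t}[f]=\mathfrak{t}(f,f)$. It is non-negative ($\mathfrak{t}\geq0$) if $\mathfrak{t}[f]\geq 0$ for all $f$. For non-negative forms $\mathfrak{u},\mathfrak{w}$ on $\mathcal{D}$: $\mathfrak{u}$ is $\mathfrak{w}$-absolutely continuous if whenever $\{f_n\}\subset\mathcal{D}$ satisfies $\mathfrak{w}[f_n]\to0$ and $\mathfrak{u}[f_n-f_m]\to0$ (as $n,m\to\infty$), then $\mathfrak{u}[f_n]\to0$; $\mathfrak{u}$ is $\mathfrak{w}$-singular if for every $f\in\mathcal{D}$ there is $\{f_n\}\subset\mathcal{D}$ with $\mathfrak{w}[f_n]\to0$ and $\mathfrak{u}[f-f_n]\to0$. For a sesquilinear form $\mathfrak{t}$, $M_l(\mathfrak{t})$ denotes the set of non-negative forms $\mathfrak{s}_1$ on $\mathcal{D}$ for which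 there exists a non-negative form $\mathfrak{s}_2$ on $\mathcal{D}$ with $|\mathfrak{t}(f,g)|\leq \mathfrak{s}_1[f]^{1/2}\mathfrak{s}_2[g]^{1/2}$ for all $f,g\in\mathcal{D}$. $\mathfrak{t}$ is $\mathfrak{w}$-left regular if some $\mathfrak{s}_1\in M_l(\mathfrak{t})$ is $\mathfrak{w}$-absolutely continuous, and $\mathfrak{w}$-left strongly singular if some $\mathfrak{s}_1\in M_l(\mathfrak{t})$ is $\mathfrak{w}$-singular. *)

(* Defs.v *)
From HB Require Import structures.
From mathcomp Require Import all_boot all_order all_algebra.
From mathcomp Require Import reals.
From mathcomp Require Import complex.
Set Implicit Arguments. Unset Strict Implicit. Unset Printing Implicit Defensive.
Import Order.TTheory GRing.Theory Num.Theory.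
Local Open Scope ring_scope.
Local Open Scope complex_scope.

Section Forms.
Variables (R : realType) (D : lmodType R[i]).

Definition sesquilinear (t : D -> D -> R[i]) : Prop :=
  (forall (a : R[i]) (f g h : D), t (a *: f + g) h = a * t f h + t g h) /\
  (forall (a : R[i]) (f g h : D), t f (a *: g + h) = a^* * t f g + t f h).

Definition nonneg_form (t : D -> D -> R[i]) : Prop :=
  sesquilinear t /\ forall f : D, 0 <= t f f.

Definition cvg0 (u : nat -> R[i]) : Prop :=
  forall e : R, 0 < e -> exists N : nat, forall n : nat, (N <= n)%N -> `|u n| < e%:C.

Definition cauchy_form (u : D -> D -> R[i]) (fs : nat -> D) : Prop :=
  forall e : R, 0 < e -> exists N : nat, forall n m : nat, (N <= n)%N -> (N <= m)%N ->
    `|u (fs n - fs m) (fs n - fs m)| < e%:C.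

Definition abs_continuous (u w : D -> D -> R[i]) : Prop :=
  forall fs : nat -> D, cvg0 (fun n => w (fs n) (fs n)) -> cauchy_form u fs ->
    cvg0 (fun n => u (fs n) (fs n)).

Definition form_singular (u w : D -> D -> R[i]) : Prop :=
  forall f : D, exists fs : nat -> D,
    cvg0 (fun n => w (fs n) (fs n)) /\ cvg0 (fun n => u (f - fs n) (f - fs n)).

Definition Ml (t s1 : D -> D -> R[i]) : Prop :=
  nonneg_form s1 /\ exists s2 : D -> D -> R[i], nonneg_form s2 /\
    forall f g : D, `|t f g| <= sqrtC (s1 f f) * sqrtC (s2 g g).

Definition left_regular (t w : D -> D -> R[i]) : Prop :=
  exists s1, Ml t s1 /\ abs_continuous s1 w.

Definition left_strongly_singular (t w : D -> D -> R[i]) : Prop :=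
  exists s1, Ml t s1 /\ form_singular s1 w.

End Forms.

(* Main.v *)
Require Import Defs.
From HB Require Import structures.
From mathcomp Require Import all_boot all_order all_algebra.
From mathcomp Require Import reals complex.
From mathcomp Require Import classical_sets boolp.
From mathcomp Require Import ring lra.
From Stdlib Require Import ClassicalEpsilon.
Import Order.TTheory GRing.Theory Num.Theory.
Local Open Scope ring_scope.
Local Open Scope complex_scope.
Local Open Scope classical_set_scope.
Set Implicit Arguments. Unset Strict Implicit. Unset Printing Implicit Defensive.
Local Notation Re := complex.Re.
Local Notation Im := complex.Im.

Section Basics.
Variable R : realType.
Local Notation C := R[i].

Definition ev (P : nat -> Prop) := exists N, forall n, (N <= n)%N -> P n.

Lemma ev_and (P Q : nat -> Prop) : ev P -> ev Q -> ev (fun n => P n /\ Q n).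
Proof.
move=> [N1 H1] [N2 H2]; exists (maxn N1 N2) => n hn; split.
  by apply: H1; apply: leq_trans hn; apply: leq_maxl.
by apply: H2; apply: leq_trans hn; apply: leq_maxr.
Qed.

Lemma ev_mono (P Q : nat -> Prop) : (forall n, P n -> Q n) -> ev P -> ev Q.
Proof. by move=> h [N HN]; exists N => n /HN /h. Qed.

Lemma ev_all (P : nat -> Prop) : (forall n, P n) -> ev P.
Proof. by move=> h; exists 0%N. Qed.

Lemma reB (x y : C) : Re (x - y) = Re x - Re y.
Proof. by case: x => a b; case: y => c d. Qed.
Lemma imB (x y : C) : Im (x - y) = Im x - Im y.
Proof. by case: x => a b; case: y => c d. Qed.
Lemma reD (x y : C) : Re (x + y) = Re x + Re y.
Proof. by case: x => a b; case: y => c d. Qed.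
Lemma imD (x y : C) : Im (x + y) = Im x + Im y.
Proof. by case: x => a b; case: y => c d. Qed.
Lemma reM (x y : C) : Re (x * y) = Re x * Re y - Im x * Im y.
Proof. by case: x => a b; case: y => c d. Qed.
Lemma imM (x y : C) : Im (x * y) = Re x * Im y + Im x * Re y.
Proof. by case: x => a b; case: y => c d. Qed.
Lemma reN (x : C) : Re (- x) = - Re x.
Proof. by case: x => a b. Qed.
Lemma imN (x : C) : Im (- x) = - Im x.
Proof. by case: x => a b. Qed.
Lemma reJ (x : C) : Re (x^*%R) = Re x.
Proof. by case: x => a b. Qed.
Lemma imJ (x : C) : Im (x^*%R) = - Im x.
Proof. by case: x => a b. Qed.
Lemma reR (x : R) : Re (x%:C) = x. Proof. by []. Qed.
Lemma imR (x : R) : Im (x%:C) = 0. Proof. by []. Qed.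
Lemma re0 : Re (0 : C) = 0. Proof. by []. Qed.
Lemma im0 : Im (0 : C) = 0. Proof. by []. Qed.
Lemma ceqP (x y : C) : Re x = Re y -> Im x = Im y -> x = y.
Proof. by case: x => a b; case: y => c d /= -> ->. Qed.

Definition ReIm := (reB, imB, reD, imD, reM, imM, reN, imN, reJ, imJ, reR, imR, re0, im0).

Definition nc2 (z : C) : R := Re z ^+ 2 + Im z ^+ 2.

Lemma nc2_ge0 z : 0 <= nc2 z.
Proof. rewrite /nc2; nra. Qed.

Lemma nc2_eq0 z : nc2 z = 0 -> z = 0.
Proof.
rewrite /nc2 => h.
have ha : Re z ^+ 2 = 0 by apply/eqP; rewrite eq_le sqr_ge0 andbT; nra.
have hb : Im z ^+ 2 = 0 by apply/eqP; rewrite eq_le sqr_ge0 andbT; nra.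
apply: ceqP; apply/eqP; by rewrite -sqrf_eq0 ?ha ?hb.
Qed.

Lemma nc2N z : nc2 (- z) = nc2 z.
Proof. rewrite /nc2 !ReIm; ring. Qed.

Lemma nc2B z y : nc2 (z - y) = nc2 (y - z).
Proof. by rewrite -nc2N opprB. Qed.

Lemma nc2M z y : nc2 (z * y) = nc2 z * nc2 y.
Proof. rewrite /nc2 !ReIm; ring. Qed.

Lemma nc2J z : nc2 (z^*%R) = nc2 z.
Proof. rewrite /nc2 !ReIm; ring. Qed.

Lemma nc2R x : nc2 (x%:C) = x ^+ 2.
Proof. rewrite /nc2 !ReIm; ring. Qed.

Lemma nc2D z y : nc2 (z + y) <= 2 * nc2 z + 2 * nc2 y.
Proof. rewrite /nc2 !ReIm; have := sqr_ge0 (Re z - Re y); have := sqr_ge0 (Im z - Im y); nra. Qed.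

Lemma nc2D_eta z y (e : R) : 0 < e ->
  nc2 (z + y) <= (1 + e) * nc2 z + (1 + e^-1) * nc2 y.
Proof.
move=> he; set k := e^-1.
have hk : e * k = 1 by rewrite /k mulfV // gt_eqF.
have k0 : 0 < k by rewrite /k invr_gt0.
rewrite /nc2 !ReIm.
set a := Re z; set b := Im z; set c := Re y; set d := Im y.
have h1 : 2 * a * c <= e * a ^+ 2 + k * c ^+ 2.
  have : 0 <= k * (e * a - c) ^+ 2 by apply: mulr_ge0; [lra | apply: sqr_ge0].
  have -> : k * (e * a - c) ^+ 2 = (e * k) * (e * a ^+ 2) - 2 * (e * k) * a * c + k * c ^+ 2 by ring.
  rewrite hk; lra.
have h2 : 2 * b * d <= e * b ^+ 2 + k * d ^+ 2.
  have : 0 <= k * (e * b - d) ^+ 2 by apply: mulr_ge0; [lra | apply: sqr_ge0].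
  have -> : k * (e * b - d) ^+ 2 = (e * k) * (e * b ^+ 2) - 2 * (e * k) * b * d + k * d ^+ 2 by ring.
  rewrite hk; lra.
nra.
Qed.

Lemma Re_le z : Re z ^+ 2 <= nc2 z.
Proof. rewrite /nc2; nra. Qed.

Lemma small_sq (e : R) : 0 < e -> exists d, [/\ 0 < d, d ^+ 2 <= e & d <= e].
Proof.
move=> he; exists (Num.min 1 e).
have h1 : Num.min 1 e <= 1 by rewrite ge_min lexx.
have h2 : Num.min 1 e <= e by rewrite ge_min lexx orbT.
have h0 : 0 < Num.min 1 e by rewrite lt_min ltr01 he.
split => //; nra.
Qed.

Lemma abs_lt_sq (x e : R) : 0 <= e -> x ^+ 2 < e ^+ 2 -> `|x| < e.
Proof.
move=> he h; rewrite -(@ltr_pXn2r _ 2) ?nnegrE ?normr_ge0 //.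
by rewrite real_normK // num_real.
Qed.

Lemma rcomplete (u : nat -> R) :
  (forall e, 0 < e -> exists N, forall n m, (N <= n)%N -> (N <= m)%N -> `|u n - u m| < e) ->
  exists L, forall e, 0 < e -> ev (fun n => `|u n - L| < e).
Proof.
move=> H.
pose A := [set x : R | exists N, forall n, (N <= n)%N -> x <= u n].
have inA : forall e, 0 < e -> forall N, (forall n m, (N <= n)%N -> (N <= m)%N -> `|u n - u m| < e) ->
    A (u N - e).
  move=> e he N HN; exists N => n hn; have := HN n N hn (leqnn N).
  rewrite ltr_norml => /andP [h1 h2]; lra.
have ubA : forall e, 0 < e -> forall N, (forall n m, (N <= n)%N -> (N <= m)%N -> `|u n - u m| < e) ->
    ubound A (u N + e).
  move=> e he N HN x [Nx Hx].
  have := HN (maxn N Nx) N (leq_maxl _ _) (leqnn N).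
  have := Hx (maxn N Nx) (leq_maxr _ _).
  rewrite ltr_norml => h1 /andP [h2 h3]; lra.
have [N1 HN1] := H 1 ltr01.
have neA : A !=set0 by exists (u N1 - 1); exact: inA.
have hsA : has_sup A by split => //; exists (u N1 + 1); exact: ubA.
exists (sup A) => e he.
have he3 : 0 < e / 3 by rewrite divr_gt0.
have [N HN] := H _ he3.
exists N => n hn.
have l1 : u N - e / 3 <= sup A by apply: sup_upper_bound => //; exact: inA.
have l2 : sup A <= u N + e / 3 by apply: ge_sup => //; exact: ubA.
have := HN n N hn (leqnn N); rewrite ltr_norml => /andP [h1 h2].
rewrite ltr_norml; apply/andP; split; lra.
Qed.

Definition ccvg (u : nat -> C) (L : C) := forall e, 0 < e -> ev (fun n => nc2 (u n - L) < e).
Definition ccauchy (u : nat -> C) := forall e, 0 < e ->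
  exists N, forall n m, (N <= n)%N -> (N <= m)%N -> nc2 (u n - u m) < e.

Lemma ccomplete u : ccauchy u -> exists L, ccvg u L.
Proof.
move=> H.
have hre : forall (f : C -> R), (forall z, f z ^+ 2 <= nc2 z) -> (forall z y, f (z - y) = f z - f y) ->
   exists L, forall e, 0 < e -> ev (fun n => `|f (u n) - L| < e).
  move=> f hf hfB; apply: rcomplete => e he.
  have [N HN] := H (e ^+ 2) (exprn_gt0 _ he).
  exists N => n m hn hm; rewrite -hfB; apply: abs_lt_sq; first lra.
  exact: le_lt_trans (hf _) (HN _ _ hn hm).
have [Lr HLr] := hre (@Re R) (@Re_le) reB.
have [Li HLi] := hre (@Im R) (fun z => ltac:(rewrite /nc2; nra)) imB.
exists (Lr +i* Li) => e he.
have he2 : 0 < e / 2 by rewrite divr_gt0.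
have [d [d0 d2 de]] := small_sq he2.
apply: ev_mono (ev_and (HLr _ d0) (HLi _ d0)) => n [h1 h2].
rewrite /nc2 reB imB /=.
have k1 : (Re (u n) - Lr) ^+ 2 < d ^+ 2.
  rewrite -real_normK ?num_real //; rewrite ltr_pXn2r ?nnegrE ?normr_ge0 //; lra.
have k2 : (Im (u n) - Li) ^+ 2 < d ^+ 2.
  rewrite -real_normK ?num_real //; rewrite ltr_pXn2r ?nnegrE ?normr_ge0 //; lra.
lra.
Qed.

Definition climit (u : nat -> C) : C := epsilon (inhabits 0) (ccvg u).

Lemma climitP u : ccauchy u -> ccvg u (climit u).
Proof. by move=> /ccomplete h; apply: epsilon_spec. Qed.

Lemma ccvg_uniq u L M : ccvg u L -> ccvg u M -> L = M.
Proof.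
move=> hL hM; apply/eqP; rewrite -subr_eq0; apply/eqP; apply: nc2_eq0.
apply/eqP; rewrite eq_le nc2_ge0 andbT; apply/ler_addgt0Pr => e he; rewrite add0r.
have he4 : 0 < e / 4 by rewrite divr_gt0.
have [n [h1 h2]] : exists n, nc2 (u n - L) < e / 4 /\ nc2 (u n - M) < e / 4.
  have [N HN] := ev_and (hL _ he4) (hM _ he4); by exists N; apply: HN.
have -> : L - M = (u n - M) + - (u n - L) by ring.
have := nc2D (u n - M) (- (u n - L)); rewrite nc2N; lra.
Qed.

Lemma ccvg_lin u v L M (a : C) : ccvg u L -> ccvg v M ->
  ccvg (fun n => a * u n + v n) (a * L + M).
Proof.
move=> hu hv e he.
have hk : 0 < e / (4 * (nc2 a + 1)) by apply: divr_gt0 => //; have := nc2_ge0 a; lra.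
have he4 : 0 < e / 4 by rewrite divr_gt0.
apply: ev_mono (ev_and (hu _ hk) (hv _ he4)) => n [h1 h2].
have -> : a * u n + v n - (a * L + M) = a * (u n - L) + (v n - M).
  by ring.
apply: le_lt_trans (nc2D _ _) _; rewrite nc2M.
have ha := nc2_ge0 a.
have : nc2 a * nc2 (u n - L) <= e / 4.
  have hp : 0 < 4 * (nc2 a + 1) by lra.
  have : nc2 a * nc2 (u n - L) <= (nc2 a + 1) * (e / (4 * (nc2 a + 1))).
    apply: ler_pM; [lra | exact: nc2_ge0 | lra | lra].
  suff -> : (nc2 a + 1) * (e / (4 * (nc2 a + 1))) = e / 4 by [].
  field; lra.
lra.
Qed.

Lemma ccvg_close u v L : ccvg u L -> (forall e, 0 < e -> ev (fun n => nc2 (v n - u n) < e)) ->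
  ccvg v L.
Proof.
move=> hu hvu e he.
have he4 : 0 < e / 4 by rewrite divr_gt0.
apply: ev_mono (ev_and (hu _ he4) (hvu _ he4)) => n [h1 h2].
have -> : v n - L = (v n - u n) + (u n - L) by ring.
have := nc2D (v n - u n) (u n - L); lra.
Qed.

Lemma ccvg_const (L : C) : ccvg (fun _ => L) L.
Proof. by move=> e he; apply: ev_all => n; rewrite subrr /nc2 /=; lra. Qed.

Lemma ccvg_bound u L (A : nat -> R) (Ainf S : R) : ccvg u L -> 0 <= S ->
  (forall n, nc2 (u n) <= A n * S) ->
  (forall e, 0 < e -> ev (fun n => A n < Ainf + e)) -> 0 <= Ainf ->
  nc2 L <= Ainf * S.
Proof.
move=> hu hS hA hAi hA0; apply/ler_addgt0Pr => e he.
set eta := e / (3 * ((Ainf + 1) * S + 1)).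
have heta : 0 < eta by apply: divr_gt0 => //; nra.
have hX : 0 <= (Ainf + 1) * S by nra.
have hetaS : eta * ((Ainf + 1) * S) <= e / 3.
  have -> : e / 3 = eta * ((Ainf + 1) * S + 1).
    rewrite /eta; field; apply/eqP; nra.
  by apply: ler_wpM2l; lra.
set del := Num.min 1 (e / (3 * (S + 1))).
have hdel : 0 < del by rewrite lt_min ltr01 divr_gt0 //; nra.
have hdel1 : del <= 1 by rewrite ge_min lexx.
have hdelS : del * S <= e / 3.
  have h2 : del <= e / (3 * (S + 1)) by rewrite ge_min lexx orbT.
  have : del * S <= e / (3 * (S + 1)) * S by apply: ler_wpM2r.
  move/le_trans; apply.
  have -> : e / 3 = e / (3 * (S + 1)) * (S + 1).
    field; apply/eqP; nra.
  apply: ler_wpM2l; last lra.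
  apply: divr_ge0; nra.
set kap := e / (3 * (1 + eta^-1)).
have hie : 0 < eta^-1 by rewrite invr_gt0.
have hkap : 0 < kap by apply: divr_gt0 => //; nra.
have [N HN] := ev_and (hu _ hkap) (hAi _ hdel).
have [h1 h2] := HN N (leqnn N).
have -> : L = u N + - (u N - L) by ring.
apply: le_trans (nc2D_eta _ _ heta) _; rewrite nc2N.
have k1 : (1 + eta) * nc2 (u N) <= (1 + eta) * ((Ainf + del) * S).
  apply: ler_wpM2l; first lra.
  apply: le_trans (hA N) _; apply: ler_wpM2r => //; lra.
have k2 : (1 + eta^-1) * nc2 (u N - L) <= e / 3.
  have : (1 + eta^-1) * nc2 (u N - L) <= (1 + eta^-1) * kap.
    by apply: ler_wpM2l; lra.
  move/le_trans; apply.
  suff -> : (1 + eta^-1) * kap = e / 3 by [].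
  rewrite /kap; field; rewrite (gt_eqF heta) gt_eqF //; lra.
have k3 : (1 + eta) * ((Ainf + del) * S) <= Ainf * S + 2 * e / 3.
  have : eta * ((Ainf + del) * S) <= eta * ((Ainf + 1) * S).
    by apply: ler_wpM2l; [lra | apply: ler_wpM2r => //; lra].
  nra.
lra.
Qed.

End Basics.


Section Forms.
Variables (R : realType) (D : lmodType R[i]).
Local Notation C := R[i].

Section Sesq.
Variable u : D -> D -> C.
Hypothesis Hu : sesquilinear u.

Lemma sD1 f g h : u (f + g) h = u f h + u g h.
Proof. by have := Hu.1 1 f g h; rewrite scale1r mul1r. Qed.
Lemma s01 h : u 0 h = 0.
Proof. by apply: (addrI (u 0 h)); rewrite addr0 -sD1 addr0. Qed.
Lemma sZ1 a f h : u (a *: f) h = a * u f h.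
Proof. by have := Hu.1 a f 0 h; rewrite !addr0 s01 addr0. Qed.
Lemma sN1 f h : u (- f) h = - u f h.
Proof. by rewrite -scaleN1r sZ1 mulN1r. Qed.
Lemma sB1 f g h : u (f - g) h = u f h - u g h.
Proof. by rewrite sD1 sN1. Qed.
Lemma sD2 f g h : u f (g + h) = u f g + u f h.
Proof.
by have := Hu.2 1 f g h; rewrite scale1r conjC1 mul1r. Qed.
Lemma s02 h : u h 0 = 0.
Proof. by apply: (addrI (u h 0)); rewrite addr0 -sD2 addr0. Qed.
Lemma sZ2 a f h : u f (a *: h) = a^*%R * u f h.
Proof. by have := Hu.2 a f h 0; rewrite !addr0 s02 addr0. Qed.
Lemma sN2 f h : u f (- h) = - u f h.
Proof. by apply: (addIr (u f h)); rewrite -sD2 !addNr s02. Qed.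
Lemma sB2 f g h : u f (g - h) = u f g - u f h.
Proof. by rewrite sD2 sN2. Qed.
End Sesq.

Lemma sesq_sub (u v : D -> D -> C) : sesquilinear u -> sesquilinear v ->
  sesquilinear (fun f g => u f g - v f g).
Proof.
move=> hu hv; split => a f g h.
  rewrite hu.1 hv.1; ring.
rewrite hu.2 hv.2; ring.
Qed.

Section NonNeg.
Variable s : D -> D -> C.
Hypothesis Hs : nonneg_form s.
Let Hs1 := Hs.1.

Definition Qf f := Re (s f f).

Lemma sdiag f : s f f = (Qf f)%:C.
Proof.
have := Hs.2 f; rewrite lecE => /andP [/eqP h _].
by apply: ceqP => //=; rewrite -h.
Qed.

Lemma Qf_ge0 f : 0 <= Qf f.
Proof. by have := Hs.2 f; rewrite sdiag ler0c. Qed.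

Lemma herm f g : s g f = (s f g)^*%R.
Proof.
have h1 : Im (s (f + g) (f + g)) = 0 by rewrite sdiag.
rewrite (sD1 Hs1) !(sD2 Hs1) !imD (sdiag f) (sdiag g) /= in h1.
have h2 : Im (s (f + 'i *: g) (f + 'i *: g)) = 0 by rewrite sdiag.
rewrite (sD1 Hs1) !(sD2 Hs1) !(sZ1 Hs1) !(sZ2 Hs1) !imD in h2. rewrite !imM !reM (sdiag f) (sdiag g) /= in h2.
apply: ceqP; rewrite ?reJ ?imJ; lra.
Qed.

Lemma Qexp f g : Qf (f + g) = Qf f + Qf g + 2 * Re (s f g).
Proof.
rewrite /Qf (sD1 Hs1) !(sD2 Hs1) (herm g f) !reD reJ; ring.
Qed.

Lemma QZ a f : Qf (a *: f) = nc2 a * Qf f.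
Proof.
rewrite /Qf (sZ1 Hs1) (sZ2 Hs1) sdiag /nc2 !ReIm; ring.
Qed.

Lemma QN f : Qf (- f) = Qf f.
Proof. by rewrite /Qf (sN1 Hs1) (sN2 Hs1) opprK. Qed.

Lemma QB f g : Qf (f - g) = Qf f + Qf g - 2 * Re (s f g).
Proof. rewrite Qexp QN (sN2 Hs1) reN; ring. Qed.

Lemma Q2 f g : Qf (f + g) <= 2 * Qf f + 2 * Qf g.
Proof. have := Qf_ge0 (f - g); rewrite QB Qexp; lra. Qed.

Lemma Q2B f g : Qf (f - g) <= 2 * Qf f + 2 * Qf g.
Proof. by have := Q2 f (- g); rewrite QN. Qed.

Lemma Qmu e h mu : Qf (e + mu *: h) = Qf e + 2 * Re (mu^*%R * s e h) + nc2 mu * Qf h.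
Proof. by rewrite Qexp QZ (sZ2 Hs1); ring. Qed.

Lemma Qmu_neg e h (r : R) :
  Qf (e + (- (r%:C * s e h)) *: h) = Qf e - 2 * r * nc2 (s e h) + r ^+ 2 * nc2 (s e h) * Qf h.
Proof.
rewrite Qmu; congr (_ + _).
  rewrite /nc2 !ReIm; ring.
rewrite nc2N nc2M nc2R; ring.
Qed.

Lemma quad_lemma (A a N : R) : 0 <= A -> 0 <= a -> 0 <= N ->
  (forall r, 0 <= A - 2 * r * N + r ^+ 2 * N * a) -> N <= a * A.
Proof.
move=> hA ha hN H.
have [a0|apos] := eqVneq a 0.
  rewrite a0 mul0r; apply/negPn/negP; rewrite -ltNge => Npos.
  have := H ((A + 1) / N); rewrite a0 mulr0 addr0.
  have -> : 2 * ((A + 1) / N) * N = 2 * (A + 1) by field; rewrite gt_eqF.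
  lra.
have ha' : 0 < a by rewrite lt_def apos.
have := H a^-1.
have -> : a^-1 ^+ 2 * N * a = a^-1 * N by field.
move=> h; have : 0 <= a * (A - 2 * a^-1 * N + a^-1 * N) by apply: mulr_ge0 => //.
have -> : a * (A - 2 * a^-1 * N + a^-1 * N) = a * A - N by field.
lra.
Qed.

Lemma CS f g : nc2 (s f g) <= Qf f * Qf g.
Proof.
rewrite mulrC; apply: quad_lemma; rewrite ?Qf_ge0 ?nc2_ge0 // => r.
rewrite -Qmu_neg; exact: Qf_ge0.
Qed.

End NonNeg.

Lemma normC2 (z : C) : `|z| ^+ 2 = (nc2 z)%:C.
Proof. by rewrite -add_Re2_Im2. Qed.

Lemma bound_from (z : C) (X Y : C) : 0 <= X -> 0 <= Y ->
  `|z| <= sqrtC X * sqrtC Y -> (nc2 z)%:C <= X * Y.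
Proof.
move=> hX hY h.
rewrite -normC2 -(sqrtCK X) -(sqrtCK Y) -exprMn.
rewrite ler_pXn2r // nnegrE ?normr_ge0 // mulr_ge0 // sqrtC_ge0 //.
Qed.

Lemma bound_to (z : C) (X Y : C) : 0 <= X -> 0 <= Y ->
  (nc2 z)%:C <= X * Y -> `|z| <= sqrtC X * sqrtC Y.
Proof.
move=> hX hY h.
rewrite -(@ler_pXn2r _ 2) // ?nnegrE ?normr_ge0 ?mulr_ge0 ?sqrtC_ge0 //.
by rewrite exprMn !sqrtCK normC2.
Qed.

Lemma Ml_bound (t s1 : D -> D -> C) : Ml t s1 ->
  exists s2, nonneg_form s2 /\ forall f g, nc2 (t f g) <= Qf s1 f * Qf s2 g.
Proof.
move=> [hs1 [s2 [hs2 hb]]]; exists s2; split => // f g.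
have := bound_from (hs1.2 f) (hs2.2 g) (hb f g).
by rewrite (sdiag hs1) (sdiag hs2) -rmorphM lecR.
Qed.

End Forms.


Lemma inv_small (R : realType) (e : R) : 0 < e -> ev (fun k => (k.+1%:R)^-1 < e).
Proof.
move=> he; exists (Num.bound (e^-1)) => k hk.
have hi : 0 <= e^-1 by rewrite invr_ge0 ltW.
have h1 := archi_boundP hi.
have h2 : e^-1 < k.+1%:R.
  apply: lt_le_trans h1 _; rewrite ler_nat; exact: leq_trans hk (leqnSn k).
rewrite -[e]invrK ltf_pV2 ?posrE ?invr_gt0 ?ltr0Sn //.
Qed.

Lemma choice_nat (T : Type) (P : nat -> T -> Prop) :
  (forall k, exists g, P k g) -> exists q, forall k, P k (q k).
Proof.
move=> H; exists (fun k => proj1_sig (constructive_indefinite_description _ (H k))).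
by move=> k; case: (constructive_indefinite_description _ (H k)).
Qed.

Section Decomp.
Variables (R : realType) (D : lmodType R[i]).
Local Notation C := R[i].
Variables s w : D -> D -> C.
Hypotheses (Hs : nonneg_form s) (Hw : nonneg_form w).
Local Notation Q := (Qf s).
Local Notation W := (Qf w).

Lemma Qf0 (u : D -> D -> C) : nonneg_form u -> Qf u 0 = 0.
Proof. by move=> hu; rewrite /Qf (s01 hu.1). Qed.

Definition mset (e : R) (f : D) := [set x : R | exists g, W g < e /\ x = Q (f - g)].
Definition mm e f := inf (mset e f).
Definition dset f := [set x : R | exists e, 0 < e /\ x = mm e f].
Definition dd f := sup (dset f).

Lemma mset_ne e f : 0 < e -> mset e f !=set0.
Proof. by move=> he; exists (Q (f - 0)); exists 0; rewrite Qf0. Qed.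

Lemma mset_lb e f : has_lbound (mset e f).
Proof. by exists 0 => x [g [_ ->]]; apply: Qf_ge0. Qed.

Lemma m_lb e f g : W g < e -> mm e f <= Q (f - g).
Proof. by move=> hg; apply: ge_inf; [exact: mset_lb | exists g]. Qed.

Lemma m_ge0 e f : 0 < e -> 0 <= mm e f.
Proof. by move=> he; apply: lb_le_inf; [exact: mset_ne | move=> x [g [_ ->]]; apply: Qf_ge0]. Qed.

Lemma m_adh e f eta : 0 < e -> 0 < eta -> exists g, W g < e /\ Q (f - g) < mm e f + eta.
Proof.
move=> he heta; have [x [g [hg ->]] hx] := inf_adherent heta (conj (mset_ne f he) (mset_lb e f)).
by exists g.
Qed.

Lemma m_leQ e f : 0 < e -> mm e f <= Q f.
Proof. by move=> he; have := @m_lb e f 0; rewrite subr0 Qf0 //; apply. Qed.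

Lemma dset_ne f : dset f !=set0.
Proof. by exists (mm 1 f); exists 1. Qed.

Lemma d_hs f : has_sup (dset f).
Proof. by split; [exact: dset_ne | exists (Q f) => x [e [he ->]]; apply: m_leQ]. Qed.

Lemma d_ub e f : 0 < e -> mm e f <= dd f.
Proof. by move=> he; apply: sup_upper_bound; [exact: d_hs | exists e]. Qed.

Lemma d_adh f del : 0 < del -> exists e, 0 < e /\ dd f - del < mm e f.
Proof.
move=> hd; have [x [e [he ->]] hx] := sup_adherent hd (d_hs f).
by exists e.
Qed.

Lemma d_le f eta : (forall e, 0 < e -> exists g, W g < e /\ Q (f - g) <= eta) -> dd f <= eta.
Proof.
move=> H; apply: ge_sup; first exact: dset_ne.
move=> x [e [he ->]]; have [g [hg hQ]] := H e he.
exact: le_trans (m_lb f hg) hQ.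
Qed.

Lemma d_ge f e eta : 0 < e -> (forall g, W g < e -> eta <= Q (f - g)) -> eta <= dd f.
Proof.
move=> he H; apply: le_trans (d_ub f he).
by apply: lb_le_inf; [exact: mset_ne | move=> x [g [hg ->]]; apply: H].
Qed.

Lemma d_ge0 f : 0 <= dd f.
Proof. by apply: le_trans (m_ge0 f ltr01) (d_ub f ltr01). Qed.

Lemma d_leQ f : dd f <= Q f.
Proof. by apply: d_le => e he; exists 0; rewrite Qf0 // subr0. Qed.

Lemma LB f del : 0 < del -> exists e, 0 < e /\ forall g, W g < e -> dd f - del < Q (f - g).
Proof.
move=> hd; have [e [he h]] := d_adh f hd; exists e; split => // g hg.
exact: lt_le_trans h (m_lb f hg).
Qed.

Lemma UB f e del : 0 < e -> 0 < del -> exists g, W g < e /\ Q (f - g) < dd f + del.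
Proof.
move=> he hd; have [g [hg hQ]] := m_adh f he hd; exists g; split => //.
apply: lt_le_trans hQ _; rewrite lerD2r; exact: d_ub.
Qed.

Lemma W_ev (a b : nat -> D) : (forall e, 0 < e -> ev (fun k => W (a k) < e)) ->
  (forall e, 0 < e -> ev (fun k => W (b k) < e)) ->
  forall e, 0 < e -> ev (fun k => W (a k + b k) < e).
Proof.
move=> ha hb e he; have he4 : 0 < e / 4 by rewrite divr_gt0.
apply: ev_mono (ev_and (ha _ he4) (hb _ he4)) => k [h1 h2].
have := Q2 Hw (a k) (b k); lra.
Qed.

Lemma W_evN (a : nat -> D) : (forall e, 0 < e -> ev (fun k => W (a k) < e)) ->
  forall e, 0 < e -> ev (fun k => W (- a k) < e).
Proof. by move=> ha e he; apply: ev_mono (ha _ he) => k; rewrite QN. Qed.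

Lemma W_evZ (a : nat -> D) (c : C) : (forall e, 0 < e -> ev (fun k => W (a k) < e)) ->
  forall e, 0 < e -> ev (fun k => W (c *: a k) < e).
Proof.
move=> ha e he; have h0 := nc2_ge0 c.
have hp : 0 < e / (nc2 c + 1) by apply: divr_gt0 => //; lra.
apply: ev_mono (ha _ hp) => k h; rewrite QZ //.
have hW := Qf_ge0 Hw (a k).
have h1 : nc2 c * W (a k) <= nc2 c * (e / (nc2 c + 1)) by apply: ler_wpM2l => //; lra.
have h2 : nc2 c * (e / (nc2 c + 1)) < (nc2 c + 1) * (e / (nc2 c + 1)) by rewrite ltr_pM2r //; lra.
have h3 : (nc2 c + 1) * (e / (nc2 c + 1)) = e by field; rewrite gt_eqF //; lra.
lra.
Qed.

Lemma subsub (x y z : D) : (x - y) - (x - z) = z - y.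
Proof. by rewrite opprB addrC addrA subrK. Qed.

Lemma subsubK (x y : D) : x - (x - y) = y.
Proof. by rewrite opprB addrC subrK. Qed.

Definition proj f (q : nat -> D) :=
  (forall e, 0 < e -> ev (fun k => W (q k) < e)) /\
  (forall e, 0 < e -> ev (fun k => Q (f - q k) < dd f + e)).

Lemma proj_ex f : exists q, proj f q.
Proof.
have H : forall k, exists g, W g < (k.+1%:R)^-1 /\ Q (f - g) < dd f + (k.+1%:R)^-1.
  by move=> k; apply: UB; rewrite invr_gt0 ltr0Sn.
have [q hq] := choice_nat H.
exists q; split => e he; apply: ev_mono (inv_small he) => k hk.
  exact: lt_trans (hq k).1 hk.
by apply: lt_trans (hq k).2 _; rewrite ltrD2l.
Qed.

Lemma proj_LB f q : proj f q -> forall del, 0 < del -> ev (fun k => dd f - del < Q (f - q k)).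
Proof.
move=> [hW _] del hd; have [e [he H]] := LB f hd.
by apply: ev_mono (hW _ he) => k /H.
Qed.

Lemma proj_bdd f q : proj f q -> ev (fun k => Q (q k) <= 2 * Q f + 2 * (dd f + 1)).
Proof.
move=> [_ hQ]; apply: ev_mono (hQ _ ltr01) => k hk.
have := Q2B Hs f (f - q k); rewrite subsubK; lra.
Qed.

Definition sm (c : nat -> C) := ccvg c 0.

Lemma sm_Re c : sm c -> forall e, 0 < e -> ev (fun k => `|Re (c k)| < e).
Proof.
move=> hc e he; apply: ev_mono (hc _ (exprn_gt0 2 he)) => k hk.
apply: abs_lt_sq; first lra.
by apply: le_lt_trans (Re_le _) _; rewrite -[c k]subr0.
Qed.

Lemma sm_lin c1 c2 a : sm c1 -> sm c2 -> sm (fun k => a * c1 k + c2 k).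
Proof. by move=> h1 h2; have := ccvg_lin a h1 h2; rewrite mulr0 addr0. Qed.

Lemma sm_ext c1 c2 : (forall k, c1 k = c2 k) -> sm c1 -> sm c2.
Proof. by move=> h h1 e he; apply: ev_mono (h1 _ he) => k; rewrite h. Qed.

Lemma Orth f q h B : proj f q -> (forall e, 0 < e -> ev (fun k => W (h k) < e)) ->
  ev (fun k => Q (h k) <= B) -> sm (fun k => s (f - q k) (h k)).
Proof.
move=> hp hh hB eps heps.
set B1 := `|B| + 1.
have hB1 : 0 < B1 by rewrite /B1; have := normr_ge0 B; lra.
have hB1' : ev (fun k => Q (h k) <= B1).
  apply: ev_mono hB => k hk; apply: le_trans hk _; rewrite /B1; have := ler_norm B; lra.
set r := B1^-1.
have hr : 0 < r by rewrite invr_gt0.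
have hrB : r * B1 = 1 by rewrite /r mulVf // gt_eqF.
set del := eps / (4 * B1).
have hdel : 0 < del by apply: divr_gt0 => //; lra.
have hdelB : del * B1 = eps / 4 by rewrite /del; field; rewrite gt_eqF.
have [e0 [he0 HLB]] := LB f hdel.
have hd0 := d_ge0 f.
set K := r ^+ 2 * ((dd f + del) * B1).
have hK : 0 <= K by rewrite /K; apply: mulr_ge0; [apply: sqr_ge0 | apply: mulr_ge0; lra].
have he1 : 0 < e0 / 4 by rewrite divr_gt0.
have he2 : 0 < e0 / (4 * (K + 1)) by apply: divr_gt0 => //; lra.
apply: ev_mono (ev_and (ev_and (hp.2 _ hdel) hB1') (ev_and (hp.1 _ he1) (hh _ he2))).
move=> k [[h1 h2] [h3 h4]].
rewrite subr0.
set c := s (f - q k) (h k).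
set mu := - (r%:C * c).
have hQe := Qf_ge0 Hs (f - q k).
have hQh := Qf_ge0 Hs (h k).
have hWh := Qf_ge0 Hw (h k).
have hN : nc2 c <= (dd f + del) * B1.
  apply: le_trans (CS Hs _ _) _; apply: ler_pM => //; lra.
have hmu : nc2 mu <= K.
  rewrite /mu nc2N nc2M nc2R /K; apply: ler_wpM2l => //; exact: sqr_ge0.
have hWg : W (q k - mu *: h k) < e0.
  apply: le_lt_trans (Q2B Hw _ _) _; rewrite QZ //.
  have : nc2 mu * W (h k) <= K * (e0 / (4 * (K + 1))).
    apply: ler_pM => //; [exact: nc2_ge0 | lra].
  have : K * (e0 / (4 * (K + 1))) <= e0 / 4.
    have -> : e0 / 4 = (K + 1) * (e0 / (4 * (K + 1))) by field; rewrite gt_eqF //; lra.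
    by apply: ler_wpM2r; lra.
  lra.
have := HLB _ hWg.
have -> : f - (q k - mu *: h k) = (f - q k) + mu *: h k.
  by rewrite opprB addrA addrAC.
rewrite /mu Qmu_neg //.
move=> hl.
have hN0 := nc2_ge0 c.
have hrN : r ^+ 2 * nc2 c * Q (h k) <= r * nc2 c.
  have -> : r * nc2 c = r ^+ 2 * nc2 c * B1 by rewrite /r; field; rewrite gt_eqF.
  by apply: ler_wpM2l => //; apply: mulr_ge0 => //; exact: sqr_ge0.
have hrN2 : r * nc2 c < 2 * del by lra.
have : nc2 c = (r * nc2 c) * B1 by rewrite /r; field; rewrite gt_eqF.
move=> ->.
have : r * nc2 c * B1 < 2 * del * B1 by rewrite ltr_pM2r.
lra.
Qed.

Lemma Uniq f p q : proj f p -> proj f q -> forall e, 0 < e -> ev (fun k => Q (p k - q k) < e).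
Proof.
move=> hp hq e he.
have hWD := W_ev hp.1 (W_evN hq.1).
have hQD : ev (fun k => Q (p k - q k) <= 2 * (2 * Q f + 2 * (dd f + 1)) + 2 * (2 * Q f + 2 * (dd f + 1))).
  apply: ev_mono (ev_and (proj_bdd hp) (proj_bdd hq)) => k [h1 h2]; have := Q2B Hs (p k) (q k); lra.
have o1 := Orth hq hWD hQD.
have o2 := Orth hp hWD hQD.
apply: ev_mono (sm_Re (sm_lin (-1) o2 o1) he) => k hk.
have E : s (p k - q k) (p k - q k) = -1 * s (f - p k) (p k - q k) + s (f - q k) (p k - q k).
  by rewrite mulN1r [RHS]addrC -(sB1 Hs.1) subsub.
rewrite /Qf E; have := ler_norm (Re (-1 * s (f - p k) (p k - q k) + s (f - q k) (p k - q k))); lra.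
Qed.

Lemma Lin f1 f2 q1 q2 a : proj f1 q1 -> proj f2 q2 ->
  proj (a *: f1 + f2) (fun k => a *: q1 k + q2 k).
Proof.
move=> h1 h2; set F := a *: f1 + f2; set q := fun k => a *: q1 k + q2 k.
have [p hp] := proj_ex F.
have hWq := W_ev (W_evZ a h1.1) h2.1.
split => // e he.
have hWD := W_ev hp.1 (W_evN hWq).
have ha := nc2_ge0 a.
have hQD : ev (fun k => Q (p k - q k) <= 2 * (2 * Q F + 2 * (dd F + 1)) + 2 * (2 * (nc2 a * (2 * Q f1 + 2 * (dd f1 + 1))) + 2 * (2 * Q f2 + 2 * (dd f2 + 1)))).
  apply: ev_mono (ev_and (proj_bdd hp) (ev_and (proj_bdd h1) (proj_bdd h2))) => k [k1 [k2 k3]].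
  have l1 := Q2B Hs (p k) (q k).
  have l2 : Q (q k) <= 2 * Q (a *: q1 k) + 2 * Q (q2 k) := Q2 Hs _ _.
  rewrite QZ // in l2.
  have l3 : nc2 a * Q (q1 k) <= nc2 a * (2 * Q f1 + 2 * (dd f1 + 1)) by apply: ler_wpM2l.
  lra.
have op := Orth hp hWD hQD.
have o1 := Orth h1 hWD hQD.
have o2 := Orth h2 hWD hQD.
have hD : sm (fun k => s (p k - q k) (p k - q k)).
  apply: sm_ext (sm_lin (-1) op (sm_lin a o1 o2)) => k.
  rewrite mulN1r [LHS]addrC -(sZ1 Hs.1) -(sD1 Hs.1) -(sB1 Hs.1).
  have E : a *: (f1 - q1 k) + (f2 - q2 k) = F - q k by rewrite /F /q scalerBr opprD addrACA.
  by rewrite E subsub.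
have he4 : 0 < e / 4 by rewrite divr_gt0.
apply: ev_mono (ev_and (ev_and (sm_Re hD he4) (sm_Re op he4)) (hp.2 _ he4)) => k [[k1 k2] k3].
have E : F - q k = (F - p k) + (p k - q k) by rewrite addrA subrK.
rewrite E Qexp //.
have := ler_norm (Re (s (p k - q k) (p k - q k))).
have := ler_norm (Re (s (F - p k) (p k - q k))).
rewrite /Qf in k3 *; lra.
Qed.

Lemma proj_sub f q (sg : nat -> nat) : proj f q -> (forall N, (N <= sg N)%N) ->
  proj f (fun k => q (sg k)).
Proof.
move=> [h1 h2] hs; split => e he.
  have [N HN] := h1 e he; exists N => k hk; apply: HN; exact: leq_trans hk (hs k).
have [N HN] := h2 e he; exists N => k hk; apply: HN; exact: leq_trans hk (hs k).
Qed.

Lemma proj_cauchy f q : proj f q -> forall e, 0 < e ->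
  exists N, forall k l, (N <= k)%N -> (N <= l)%N -> Q (q k - q l) < e.
Proof.
move=> hp e he; apply: contrapT => Hn.
have H : forall N, exists kl : nat * nat, [/\ (N <= kl.1)%N, (N <= kl.2)%N & e <= Q (q kl.1 - q kl.2)].
  move=> N; apply: contrapT => HN; apply: Hn; exists N => k l hk hl.
  rewrite ltNge; apply/negP => hle; apply: HN; by exists (k, l).
have [sg hsg] := choice_nat H.
have hp1 := proj_sub (sg := fun N => (sg N).1) hp (fun N => let: And3 a _ _ := hsg N in a).
have hp2 := proj_sub (sg := fun N => (sg N).2) hp (fun N => let: And3 _ a _ := hsg N in a).
have [N HN] := Uniq hp1 hp2 he.
have := HN N (leqnn N); case: (hsg N) => _ _; lra.
Qed.

Definition Qs f := epsilon (inhabits (fun _ : nat => (0 : D))) (proj f).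

Lemma Qs_proj f : proj f (Qs f).
Proof. by apply: epsilon_spec; apply: proj_ex. Qed.

Lemma asym_lin a f1 f2 e : 0 < e ->
  ev (fun k => Q (Qs (a *: f1 + f2) k - (a *: Qs f1 k + Qs f2 k)) < e).
Proof. exact: Uniq (Qs_proj _) (Lin a (Qs_proj f1) (Qs_proj f2)) e. Qed.

End Decomp.


Lemma small_mul (R : realType) (x U e : R) : 0 <= x -> 0 <= U -> 0 < e ->
  x < e / (U + 1) -> x * U < e.
Proof.
move=> hx hU he h.
have h1 : x * U <= e / (U + 1) * U by apply: ler_wpM2r => //; lra.
have h2 : e / (U + 1) * U < e / (U + 1) * (U + 1).
  by rewrite ltr_pM2l ?divr_gt0 //; lra.
have h3 : e / (U + 1) * (U + 1) = e by field; rewrite gt_eqF //; lra.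
lra.
Qed.

Lemma ccvg_ext (R : realType) (u v : nat -> R[i]) L : (forall k, u k = v k) -> ccvg u L -> ccvg v L.
Proof. by move=> h hu e he; apply: ev_mono (hu _ he) => k; rewrite h. Qed.

Lemma ccvg_real (R : realType) (a : nat -> R) (A : R) :
  (forall del, 0 < del -> ev (fun k => `|a k - A| < del)) -> ccvg (fun k => (a k)%:C) (A%:C).
Proof.
move=> h e he; have [d [d0 d2 _]] := small_sq he.
apply: ev_mono (h _ d0) => k hk.
rewrite -rmorphB nc2R -real_normK ?num_real //.
apply: lt_le_trans d2; rewrite ltr_pXn2r ?nnegrE ?normr_ge0 //; lra.
Qed.

Section Limits.
Variables (R : realType) (D : lmodType R[i]).
Local Notation C := R[i].
Variables s w : D -> D -> C.
Hypotheses (Hs : nonneg_form s) (Hw : nonneg_form w).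
Local Notation Q := (Qf s).
Local Notation W := (Qf w).
Local Notation Qs := (Qs s w).
Local Notation dd := (dd s w).

Section Lu.
Variable u : D -> D -> C.
Variable U : D -> R.
Hypotheses (Hu : sesquilinear u) (HU : forall g, 0 <= U g)
  (Hub : forall x g, nc2 (u x g) <= Q x * U g).

Definition Lu f g := climit (fun k => u (Qs f k) g).

Lemma Lu_cvg f g : ccvg (fun k => u (Qs f k) g) (Lu f g).
Proof.
apply: climitP => e he.
have hU := HU g.
have hp : 0 < e / (U g + 1) by apply: divr_gt0 => //; lra.
have [N HN] := proj_cauchy Hs Hw (Qs_proj Hs Hw f) hp.
exists N => k l hk hl.
rewrite -(sB1 Hu).
apply: le_lt_trans (Hub _ _) _.
by apply: small_mul => //; [apply: Qf_ge0 | apply: HN].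
Qed.

Lemma Lu_sesq : sesquilinear Lu.
Proof.
split => a f g h.
  apply: (ccvg_uniq (Lu_cvg _ _)).
  apply: (ccvg_close (ccvg_lin a (Lu_cvg f h) (Lu_cvg g h))) => e he.
  have hU := HU h.
  have hp : 0 < e / (U h + 1) by apply: divr_gt0 => //; lra.
  apply: ev_mono (asym_lin Hs Hw a f g hp) => k hk.
  rewrite -(sZ1 Hu) -(sD1 Hu) -(sB1 Hu).
  apply: le_lt_trans (Hub _ _) _.
  by apply: small_mul => //; apply: Qf_ge0.
apply: (ccvg_uniq (Lu_cvg _ _)).
apply: ccvg_ext (ccvg_lin (a^*%R) (Lu_cvg f g) (Lu_cvg f h)) => k.
by rewrite (sD2 Hu) (sZ2 Hu).
Qed.

Lemma Lu_bound f g : nc2 (Lu f g) <= (Q f - dd f) * U g.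
Proof.
set q := Qs f.
have hp := Qs_proj Hs Hw f.
apply: (ccvg_bound (A := fun k => Q (q k))) (Lu_cvg f g) (HU g) _ _ _.
- by move=> k; apply: Hub.
- move=> e he.
  have he2 : 0 < e / 2 by rewrite divr_gt0.
  have he4 : 0 < e / 4 by rewrite divr_gt0.
  have o := Orth Hs Hw hp hp.1 (proj_bdd Hs hp).
  apply: ev_mono (ev_and (proj_LB Hs Hw hp he2) (sm_Re o he4)) => k [k1 k2].
  move: k2; rewrite ltr_norml => /andP [k2 k3].
  have := Qexp Hs (f - q k) (q k); rewrite subrK; lra.
- have := d_leQ Hs Hw f; lra.
Qed.

Lemma Lu_rcvg f g : ccvg (fun k => u (f - Qs f k) g) (u f g - Lu f g).
Proof.
have := ccvg_lin (-1) (Lu_cvg f g) (ccvg_const (u f g)).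
rewrite mulN1r addrC; apply: ccvg_ext => k.
by rewrite (sB1 Hu) mulN1r addrC.
Qed.

Lemma Lu_rbound f g : nc2 (u f g - Lu f g) <= dd f * U g.
Proof.
have hp := Qs_proj Hs Hw f.
apply: (ccvg_bound (A := fun k => Q (f - Qs f k))) (Lu_rcvg f g) (HU g) _ _ (d_ge0 Hs Hw f).
- by move=> k; apply: Hub.
- exact: hp.2.
Qed.

End Lu.

Definition Ls := Lu s.

Lemma s_sesq : sesquilinear s. Proof. exact: Hs.1. Qed.
Lemma s_bnd x g : nc2 (s x g) <= Q x * Q g. Proof. exact: CS. Qed.

Lemma sq_cvg f : ccvg (fun k => s (Qs f k) f) ((Q f - dd f)%:C).
Proof.
set q := Qs f.
have hp := Qs_proj Hs Hw f.
have o := Orth Hs Hw hp hp.1 (proj_bdd Hs hp).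
have hx : ccvg (fun k => (Q (f - q k))%:C) ((dd f)%:C).
  apply: ccvg_real => del hd.
  apply: ev_mono (ev_and (proj_LB Hs Hw hp hd) (hp.2 _ hd)) => k [k1 k2].
  rewrite ltr_norml; apply/andP; split; lra.
have := ccvg_lin (-1) (ccvg_lin 1 hx o) (ccvg_const ((Q f)%:C)).
have -> : -1 * (1 * (dd f)%:C + 0) + (Q f)%:C = (Q f - dd f)%:C by rewrite rmorphB /=; ring.
apply: ccvg_ext => k.
rewrite mul1r mulN1r.
have e1 : s (q k) f = s f f - s (f - q k) f by rewrite (sB1 Hs.1) subKr.
have e2 : s (f - q k) f = s (f - q k) (f - q k) + s (f - q k) (q k).
  by rewrite (sB2 Hs.1) subrK.
rewrite e1 e2 (sdiag Hs (f - q k)) (sdiag Hs f); ring.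
Qed.

Lemma Ls_diag f : Ls f f = (Q f - dd f)%:C.
Proof. exact: ccvg_uniq (Lu_cvg s_sesq (Qf_ge0 Hs) s_bnd f f) (sq_cvg f). Qed.

End Limits.


Lemma normCR (R : realType) (x : R) : 0 <= x -> `|x%:C| = x%:C.
Proof. by move=> h; rewrite ger0_norm // ler0c. Qed.

Section Final.
Variables (R : realType) (D : lmodType R[i]).
Local Notation C := R[i].
Variables s w : D -> D -> C.
Hypotheses (Hs : nonneg_form s) (Hw : nonneg_form w).
Local Notation Q := (Qf s).
Local Notation W := (Qf w).
Local Notation dd := (dd s w).

Definition sa f g := s f g - Ls s w f g.

Lemma sa_diag f : sa f f = (dd f)%:C.
Proof. by rewrite /sa Ls_diag // (sdiag Hs) rmorphB /=; ring. Qed.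

Lemma sa_nonneg : nonneg_form sa.
Proof.
have h := @Lu_sesq _ _ s w Hs Hw s (Qf s) (s_sesq Hs) (Qf_ge0 Hs) (s_bnd Hs).
split; first exact: sesq_sub Hs.1 h.
by move=> f; rewrite sa_diag ler0c; apply: d_ge0.
Qed.

Lemma sb_nonneg : nonneg_form (Ls s w).
Proof.
have h := @Lu_sesq _ _ s w Hs Hw s (Qf s) (s_sesq Hs) (Qf_ge0 Hs) (s_bnd Hs).
split; first exact: h.
by move=> f; rewrite Ls_diag // ler0c subr_ge0; apply: d_leQ.
Qed.

Lemma sa_abs : abs_continuous sa w.
Proof.
move=> fs hw hc.
have hW : forall e, 0 < e -> ev (fun n => W (fs n) < e).
  move=> e he; have [N HN] := hw e he; exists N => n hn.
  by have := HN n hn; rewrite (sdiag Hw) normCR ?Qf_ge0 // ltcR.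
have hC : forall e, 0 < e -> exists N, forall n m, (N <= n)%N -> (N <= m)%N -> dd (fs n - fs m) < e.
  move=> e he; have [N HN] := hc e he; exists N => n m hn hm.
  by have := HN n m hn hm; rewrite sa_diag normCR ?d_ge0 // ltcR.
move=> e he.
have he3 : 0 < e / 3 by rewrite divr_gt0.
have [N HN] := hC _ he3.
exists N => m hm; rewrite sa_diag normCR ?d_ge0 // ltcR.
suff : dd (fs m) <= 2 * (e / 3) by lra.
apply: (d_le Hs) => e' he'.
have he4 : 0 < e' / 4 by rewrite divr_gt0.
have [N' HN'] := hW _ he4.
set n := maxn N N'.
have hh : dd (fs m - fs n) < e / 3 := HN m n hm (leq_maxl _ _).
have [g [hg hQ]] := UB Hs Hw (fs m - fs n) he4 he3.
exists (fs n + g); split.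
  have := Q2 Hw (fs n) g; have := HN' n (leq_maxr _ _); lra.
have -> : fs m - (fs n + g) = (fs m - fs n) - g by rewrite opprD addrA.
lra.
Qed.

Lemma sb_sing : form_singular (Ls s w) w.
Proof.
move=> f; set q := Qs s w f; have hp := Qs_proj Hs Hw f.
exists q; split.
  move=> e he; have [N HN] := hp.1 e he; exists N => n hn.
  by rewrite (sdiag Hw) normCR ?Qf_ge0 // ltcR; apply: HN.
move=> e he; have he2 : 0 < e / 2 by rewrite divr_gt0.
have [e0 [he0 HLB]] := LB Hs Hw f he2.
have he04 : 0 < e0 / 4 by rewrite divr_gt0.
have [N HN] := ev_and (hp.1 _ he04) (hp.2 _ he2).
exists N => n hn; have [k1 k2] := HN n hn.
rewrite Ls_diag // normCR; last by rewrite subr_ge0; apply: d_leQ.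
rewrite ltcR.
have : dd f - e / 2 <= dd (f - q n).
  apply: (d_ge Hs Hw (e := e0 / 4)) => // g hg.
  have hW2 : W (q n + g) < e0 by have := Q2 Hw (q n) g; lra.
  have := HLB _ hW2; rewrite opprD addrA => h; exact: ltW.
lra.
Qed.

End Final.

Theorem mainTheorem1 (R : realType) (D : lmodType R[i])
  (t w : D -> D -> R[i]) :
  sesquilinear t -> nonneg_form w -> (exists s1, Ml t s1) ->
  exists tlr tls : D -> D -> R[i],
    sesquilinear tlr /\ sesquilinear tls /\
    (forall f g : D, t f g = tlr f g + tls f g) /\
    left_regular tlr w /\ left_strongly_singular tls w.
Proof.
move=> Ht Hw [s hM].
have [s2 [Hs2 Hb]] := Ml_bound hM.
have Hs : nonneg_form s := hM.1.
have HU : forall g, 0 <= Qf s2 g := Qf_ge0 Hs2.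
have Ltsesq : sesquilinear (Lu s w t) := Lu_sesq Hs Hw Ht HU Hb.
exists (fun f g => t f g - Lu s w t f g), (Lu s w t).
split; first exact: sesq_sub Ht Ltsesq.
split; first exact: Ltsesq.
split; first by move=> f g; rewrite subrK.
split.
  exists (sa s w); split; last exact: sa_abs Hs Hw.
  split; first exact: sa_nonneg Hs Hw.
  exists s2; split => // f g.
  rewrite sa_diag // (sdiag Hs2); apply: bound_to; rewrite ?ler0c ?Qf_ge0 ?d_ge0 //.
  rewrite -rmorphM lecR; exact: (@Lu_rbound _ _ s w Hs Hw t (Qf s2) Ht HU Hb f g).
exists (Ls s w); split; last exact: sb_sing Hs Hw.
split; first exact: sb_nonneg Hs Hw.
exists s2; split => // f g.
rewrite Ls_diag // (sdiag Hs2); apply: bound_to; rewrite ?ler0c ?Qf_ge0 ?subr_ge0 ?d_leQ //.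
rewrite -rmorphM lecR; exact: (@Lu_bound _ _ s w Hs Hw t (Qf s2) Ht HU Hb f g).
Qed.
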